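(* Under the Setting and Algorithm in the context, suppose $\{\gamma_k\}$, $\{\eta_k\}$ and $s$ satisfy $$\frac{N-s+1}{2}\min_{k\in\mathcal N}\gamma_k\eta_k>D_{\mathcal X}^2+\frac12\sum_{k\in\mathcal B}\gamma_k^2L_f^2+\frac12\sum_{k\in\mathcal N}\gamma_k^2L_{g,\mathcal X}^2.$$ Then $$f(\bar x_{N,s})-f(x^* )\le\frac{2D_{\mathcal X}^2+\sum_{k\in\mathcal B}\gamma_k^2L_f^2+\sum_{k\in\mathcal N}\gamma_k^2L_{g,\mathcal X}^2}{(N-s+1)\min_{k\in\mathcal B}\gamma_k}$$ and $$G(\bar x_{N,s})\le\frac{\sum_{k\in\mathcal B}\gamma_k(\eta_k+\varepsilon_k)}{\sum_{k\in\mathcal B}\gamma_k}.$$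
   Context: Setting. $\mathcal X\subset\mathbb R^n$ is convex and compact; $f:\mathcal X\to\mathbb R$ is convex and $L_f$-Lipschitz; $\Delta\subset\mathbb R^d$ is compact; $g:\mathcal X\times\Delta\to\mathbb R$ is such that for every $\delta\in\Delta$, $x\mapsto g(x,\delta)$ is convex and $L_{g,\mathcal X}$-Lipschitz, and for every $x\in\mathcal X$, $\delta\mapsto g(x,\delta)$ is $L_{g,\Delta}$-Lipschitz. Let $G(x):=\max_{\delta\in\Delta}g(x,\delta)$ and assume the problem $\min_{x\in\mathcal X}\{f(x):G(x)\le0\}$ has an optimal solution $x^*$. Norms are Euclidean. $f'(x)$ denotes a subgradient of $f$ at $x$ and $g'(x,\delta)$ a subgradient of $g(\cdot,\delta)$ at $x$. Let $\omega_{\mathcal X}:\mathcal X\to\mathbb R$ be continuously differentiable and $1$-strongly convex; $V(x,z):=\omega_{\mathcal X}(z)-\omega_{\mathcal X}(x)-\langle\nabla\omega_{\mathcal X}(x),z-x\rangle$; prox-mapping $P_{x,\mathcal X}(y):=\arg\min_{z\in\mathcal X}\{\langle y,z\rangle+V(x,z)\}$; $D_{\mathcal X}:=\sqrt{\max_{x,z\in\mathcal X}V(x,z)}$. Algorithm (inexact CSA). Inputs: $N\ge1$, $x_1\in\mathcal X$, tolerances $\eta_k>0$, step-sizes $\gamma_k>0$. For $k=1,\dots,N$: choose some $\delta_k\in\Delta$ (an approximate maximizer of $g(x_k,\cdot)$); set $h_k=f'(x_k)$ if $g(x_k,\delta_k)\le\eta_k$ and $h_k=g'(x_k,\delta_k)$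 otherwise; set $x_{k+1}=P_{x_k,\mathcal X}(\gamma_kh_k)$. For $1\le s\le N$ let $I=\{s,\dots,N\}$, $\mathcal B:=\{k\in I: g(x_k,\delta_k)\le\eta_k\}$, $\mathcal N:=I\setminus\mathcal B$, and output $\bar x_{N,s}:=\sum_{k\in\mathcal B}\gamma_kx_k/\sum_{k\in\mathcal B}\gamma_k$. The cut-generation errors are $\varepsilon_k:=G(x_k)-g(x_k,\delta_k)\ge0$. (The minimum over an empty set is $+\infty$.) *)

(* Defs.v *)
(* Stdlib Reals. Vectors of R^n are represented as functions nat -> R
   that vanish at indices >= n. *)
From Stdlib Require Import Reals Lra List.
Open Scope R_scope.

Definition Vec := nat -> R.

Definition inRn (n : nat) (v : Vec) : Prop := forall i, (n <= i)%nat -> v i = 0.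

Definition vadd (u v : Vec) : Vec := fun i => u i + v i.
Definition vsub (u v : Vec) : Vec := fun i => u i - v i.
Definition vscal (a : R) (v : Vec) : Vec := fun i => a * v i.

Fixpoint inner (n : nat) (u v : Vec) : R :=
  match n with O => 0 | S m => inner m u v + u m * v m end.
Definition vnorm (n : nat) (v : Vec) : R := sqrt (inner n v v).

(* Compactness of a subset of R^n: closed and bounded (Heine-Borel). *)
Definition compact_set (n : nat) (S : Vec -> Prop) : Prop :=
  (forall v, S v -> inRn n v) /\
  (exists M, forall v, S v -> vnorm n v <= M) /\
  (forall (u : nat -> Vec) (v : Vec), inRn n v -> (forall m, S (u m)) ->
       Un_cv (fun m => vnorm n (vsub (u m) v)) 0 -> S v).

Definition convex_set (S : Vec -> Prop) : Prop :=
  forall x y t, S x -> S y -> 0 <= t <= 1 -> S (vadd (vscal t x) (vscal (1 - t) y)).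

Definition convex_on (S : Vec -> Prop) (h : Vec -> R) : Prop :=
  forall x y t, S x -> S y -> 0 <= t <= 1 ->
    h (vadd (vscal t x) (vscal (1 - t) y)) <= t * h x + (1 - t) * h y.

Definition lipschitz_on (n : nat) (S : Vec -> Prop) (L : R) (h : Vec -> R) : Prop :=
  forall x y, S x -> S y -> Rabs (h x - h y) <= L * vnorm n (vsub x y).

Definition subgrad (n : nat) (S : Vec -> Prop) (phi : Vec -> R) (x h : Vec) : Prop :=
  forall z, S z -> phi z >= phi x + inner n h (vsub z x).

Definition C1_on (n : nat) (S : Vec -> Prop) (omega : Vec -> R) (domega : Vec -> Vec) : Prop :=
  (forall x, S x -> forall eps, eps > 0 -> exists del, del > 0 /\
     forall z, S z -> vnorm n (vsub z x) < del ->
       Rabs (omega z - omega x - inner n (domega x) (vsub z x)) <= eps * vnorm n (vsub z x)) /\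
  (forall x, S x -> forall eps, eps > 0 -> exists del, del > 0 /\
     forall z, S z -> vnorm n (vsub z x) < del -> vnorm n (vsub (domega z) (domega x)) < eps).

Definition strongly_convex1 (n : nat) (S : Vec -> Prop) (omega : Vec -> R) : Prop :=
  forall x y t, S x -> S y -> 0 <= t <= 1 ->
    omega (vadd (vscal t x) (vscal (1 - t) y)) <=
      t * omega x + (1 - t) * omega y - t * (1 - t) / 2 * (vnorm n (vsub x y))^2.

Definition Breg (n : nat) (omega : Vec -> R) (domega : Vec -> Vec) (x z : Vec) : R :=
  omega z - omega x - inner n (domega x) (vsub z x).

Definition is_prox (n : nat) (S : Vec -> Prop) (omega : Vec -> R) (domega : Vec -> Vec)
  (x y p : Vec) : Prop :=
  S p /\ forall z, S z ->
    inner n y p + Breg n omega domega x p <= inner n y z + Breg n omega domega x z.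

Definition is_max_on {A : Type} (S : A -> Prop) (phi : A -> R) (m : R) : Prop :=
  (exists d, S d /\ phi d = m) /\ (forall d, S d -> phi d <= m).

Definition sumR (l : list nat) (a : nat -> R) : R := fold_right (fun k acc => a k + acc) 0 l.

(* minimum over a finite list of indices; None stands for +infinity (empty list) *)
Definition ominR (l : list nat) (a : nat -> R) : option R :=
  fold_right (fun k acc => match acc with
                           | None => Some (a k)
                           | Some m => Some (Rmin (a k) m) end) None l.

Definition Rleb (a b : R) : bool := if Rle_dec a b then true else false.

Definition Iset (s N : nat) : list nat := seq s (N - s + 1).

(* Main.v *)
Require Import Defs.
From Stdlib Require Import Reals List Lra Lia FunctionalExtensionality.
Open Scope R_scope.

Lemma inner_sub_l n u v w : inner n (vsub u v) w = inner n u w - inner n v w.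
Proof. induction n; simpl; [ring|rewrite IHn; unfold vsub; ring]. Qed.
Lemma inner_sub_r n u v w : inner n w (vsub u v) = inner n w u - inner n w v.
Proof. induction n; simpl; [ring|rewrite IHn; unfold vsub; ring]. Qed.
Lemma inner_add_r n u v w : inner n w (vadd u v) = inner n w u + inner n w v.
Proof. induction n; simpl; [ring|rewrite IHn; unfold vadd; ring]. Qed.
Lemma inner_scal_l n a u v : inner n (vscal a u) v = a * inner n u v.
Proof. induction n; simpl; [ring|rewrite IHn; unfold vscal; ring]. Qed.
Lemma inner_scal_r n a u v : inner n u (vscal a v) = a * inner n u v.
Proof. induction n; simpl; [ring|rewrite IHn; unfold vscal; ring]. Qed.
Lemma inner_comm n u v : inner n u v = inner n v u.
Proof. induction n; simpl; [ring|rewrite IHn; ring]. Qed.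
Lemma inner_pos n v : 0 <= inner n v v.
Proof. induction n; simpl; [lra|nra]. Qed.
Lemma vnorm_pos n v : 0 <= vnorm n v.
Proof. apply sqrt_pos. Qed.
Lemma vnorm_sq n v : vnorm n v ^ 2 = inner n v v.
Proof. unfold vnorm. simpl. rewrite Rmult_1_r. apply sqrt_sqrt, inner_pos. Qed.
Lemma vnorm_scal n t v : 0 <= t -> vnorm n (vscal t v) = t * vnorm n v.
Proof. intros. unfold vnorm. rewrite inner_scal_l, inner_scal_r, <- Rmult_assoc.
  rewrite sqrt_mult by (nra || apply inner_pos). rewrite sqrt_square by lra. reflexivity. Qed.
Lemma inner_sub_sym n a b : inner n (vsub a b) (vsub a b) = inner n (vsub b a) (vsub b a).
Proof. rewrite !inner_sub_l, !inner_sub_r. rewrite (inner_comm n a b). ring. Qed.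
Lemma inner_half n u v : inner n u v <= (inner n u u + inner n v v) / 2.
Proof. pose proof (inner_pos n (vsub u v)). rewrite !inner_sub_l, !inner_sub_r in H.
  rewrite (inner_comm n v u) in H. lra. Qed.

Lemma abs_le_l y z : Rabs y <= z -> -z <= y.
Proof. unfold Rabs; destruct (Rcase_abs y); lra. Qed.
Lemma abs_le_r y z : Rabs y <= z -> y <= z.
Proof. unfold Rabs; destruct (Rcase_abs y); lra. Qed.

Lemma eps_arg a b c : 0 <= c -> (forall eps, eps > 0 -> a >= b - eps * c) -> a >= b.
Proof. intros Hc H. destruct (Rge_or_lt a b) as [|Hlt]; auto.
  set (e := (b - a) / (2 * (c + 1))).
  assert (He : e > 0) by (unfold e; apply Rdiv_lt_0_compat; lra).
  assert (E : e * (c + 1) = (b - a) / 2) by (unfold e; field; lra).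
  specialize (H e He). nra. Qed.

Lemma breg_lb n X omega domega x p :
  convex_set X -> C1_on n X omega domega -> strongly_convex1 n X omega -> X x -> X p ->
  Breg n omega domega x p >= vnorm n (vsub p x) ^ 2 / 2.
Proof.
  intros HXc [Hd _] Hsc Hx Hp.
  set (M := vnorm n (vsub p x)).
  assert (HM: 0 <= M) by apply vnorm_pos.
  apply (eps_arg _ _ (M^2/2 + M)); [nra|].
  intros eps Heps.
  destruct (Hd x Hx eps Heps) as [del [Hdel Hdz]].
  assert (Hq : del / (2*(M+1)) > 0) by (apply Rdiv_lt_0_compat; lra).
  set (t := Rmin 1 (Rmin eps (del / (2*(M+1))))).
  assert (Ht0: 0 < t) by (apply Rmin_glb_lt; [lra|apply Rmin_glb_lt; lra]).
  assert (Ht1: t <= 1) by apply Rmin_l.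
  assert (Hte: t <= eps) by (eapply Rle_trans; [apply Rmin_r|apply Rmin_l]).
  assert (Htd: t <= del / (2*(M+1))) by (eapply Rle_trans; [apply Rmin_r|apply Rmin_r]).
  assert (HtM: t * M < del).
  { assert (E: del / (2*(M+1)) * (2*(M+1)) = del) by (field; lra). nra. }
  set (zt := vadd (vscal t p) (vscal (1-t) x)).
  assert (Ezt: vsub zt x = vscal t (vsub p x)).
  { apply functional_extensionality; intro i; unfold zt, vsub, vscal, vadd; ring. }
  assert (Hzt: X zt) by (apply HXc; auto; lra).
  specialize (Hdz zt Hzt). rewrite Ezt, vnorm_scal in Hdz by lra. fold M in Hdz.
  specialize (Hdz HtM).
  pose proof (Hsc p x t Hp Hx (conj (Rlt_le _ _ Ht0) Ht1)) as Hs. fold zt M in Hs.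
  rewrite inner_scal_r in Hdz. apply abs_le_l in Hdz.
  unfold Breg. fold M.
  set (Q := inner n (domega x) (vsub p x)) in *.
  assert (H1 : t * ((omega p - omega x - Q) - ((1-t)*M^2/2 - eps*M)) >= 0) by nra.
  assert (H2 : (omega p - omega x - Q) - ((1-t)*M^2/2 - eps*M) >= 0).
  { destruct (Rge_or_lt ((omega p - omega x - Q) - ((1-t)*M^2/2 - eps*M)) 0); auto. nra. }
  nra.
Qed.

Lemma three_point n X omega domega x y p z :
  convex_set X -> C1_on n X omega domega -> X x -> is_prox n X omega domega x y p -> X z ->
  inner n y p - inner n y z <=
  Breg n omega domega x z - Breg n omega domega p z - Breg n omega domega x p.
Proof.
  intros HXc [Hd _] Hx [Hp Hmin] Hz.
  set (Nz := vnorm n (vsub z p)).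
  assert (HN: 0 <= Nz) by apply vnorm_pos.
  assert (HQ: inner n y z - inner n y p + (inner n (domega p) z - inner n (domega p) p)
            - (inner n (domega x) z - inner n (domega x) p) >= 0).
  { apply (eps_arg _ _ Nz HN). intros eps Heps.
    destruct (Hd p Hp eps Heps) as [del [Hdel Hdz]].
    assert (Hq : del / (2*(Nz+1)) > 0) by (apply Rdiv_lt_0_compat; lra).
    set (t := Rmin 1 (del / (2*(Nz+1)))).
    assert (Ht0: 0 < t) by (apply Rmin_glb_lt; lra).
    assert (Ht1: t <= 1) by apply Rmin_l.
    assert (Htd: t <= del / (2*(Nz+1))) by apply Rmin_r.
    assert (HtM: t * Nz < del).
    { assert (E: del / (2*(Nz+1)) * (2*(Nz+1)) = del) by (field; lra). nra. }
    set (zt := vadd (vscal t z) (vscal (1-t) p)).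
    assert (Ezt: vsub zt p = vscal t (vsub z p)).
    { apply functional_extensionality; intro i; unfold zt, vsub, vscal, vadd; ring. }
    assert (Hzt: X zt) by (apply HXc; auto; lra).
    specialize (Hdz zt Hzt). rewrite Ezt, vnorm_scal in Hdz by lra. fold Nz in Hdz.
    specialize (Hdz HtM). apply abs_le_r in Hdz.
    rewrite inner_scal_r, inner_sub_r in Hdz.
    specialize (Hmin zt Hzt). unfold Breg in Hmin.
    rewrite !inner_sub_r in Hmin. unfold zt in Hmin.
    rewrite !inner_add_r, !inner_scal_r in Hmin. fold zt in Hmin.
    assert (H1 : t * (inner n y z - inner n y p + (inner n (domega p) z - inner n (domega p) p)
            - (inner n (domega x) z - inner n (domega x) p) + eps * Nz) >= 0) by nra.
    destruct (Rge_or_lt (inner n y z - inner n y p + (inner n (domega p) z - inner n (domega p) p)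
            - (inner n (domega x) z - inner n (domega x) p) + eps * Nz) 0); nra. }
  unfold Breg. rewrite !inner_sub_r. lra.
Qed.

Lemma sumR_cons a l f : sumR (a::l) f = f a + sumR l f.
Proof. reflexivity. Qed.
Lemma sumR_le l a b : (forall k, In k l -> a k <= b k) -> sumR l a <= sumR l b.
Proof. induction l; simpl; intros H; [lra|]. pose proof (H a0 (or_introl eq_refl)).
  assert (sumR l a <= sumR l b) by (apply IHl; auto). lra. Qed.
Lemma sumR_ext_in l a b : (forall k, In k l -> a k = b k) -> sumR l a = sumR l b.
Proof. induction l; simpl; intros H; [lra|]. rewrite (H a0 (or_introl eq_refl)), IHl; auto. Qed.
Lemma sumR_plus l a b : sumR l (fun k => a k + b k) = sumR l a + sumR l b.
Proof. induction l; simpl; [lra|rewrite IHl; ring]. Qed.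
Lemma sumR_minus l a b : sumR l (fun k => a k - b k) = sumR l a - sumR l b.
Proof. induction l; simpl; [lra|rewrite IHl; ring]. Qed.
Lemma sumR_scal l c a : sumR l (fun k => c * a k) = c * sumR l a.
Proof. induction l; simpl; [lra|rewrite IHl; ring]. Qed.
Lemma sumR_nonneg l a : (forall k, In k l -> 0 <= a k) -> 0 <= sumR l a.
Proof. induction l; simpl; intros H; [lra|]. pose proof (H a0 (or_introl eq_refl)).
  assert (0 <= sumR l a) by (apply IHl; auto). lra. Qed.
Lemma sumR_pos l a : l <> nil -> (forall k, In k l -> 0 < a k) -> 0 < sumR l a.
Proof. destruct l as [|b l]; [congruence|]. intros _ H. rewrite sumR_cons.
  pose proof (H b (or_introl eq_refl)).
  assert (0 <= sumR l a) by (apply sumR_nonneg; intros; apply Rlt_le, H; right; auto). lra. Qed.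
Lemma sumR_split (p : nat -> bool) l a :
  sumR l a = sumR (filter p l) a + sumR (filter (fun k => negb (p k)) l) a.
Proof. induction l; simpl; [lra|]. destruct (p a0); simpl; rewrite IHl; ring. Qed.
Lemma length_split (p : nat -> bool) l :
  length l = (length (filter p l) + length (filter (fun k => negb (p k)) l))%nat.
Proof. induction l; simpl; [lia|]. destruct (p a); simpl; lia. Qed.
Lemma telesc (F : nat -> R) s m :
  sumR (seq s m) (fun k => F k - F (S k)) = F s - F (s + m)%nat.
Proof. revert s; induction m; intros s; simpl.
  - rewrite Nat.add_0_r; ring.
  - rewrite IHm, Nat.add_succ_r. simpl. ring. Qed.

Lemma ominR_some l a : l <> nil -> exists m, ominR l a = Some m.
Proof. destruct l as [|b l]; [congruence|]. intros _. simpl.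
  destruct (ominR l a); eauto. Qed.
Lemma ominR_le l a m : ominR l a = Some m -> forall k, In k l -> m <= a k.
Proof. revert m; induction l; simpl; [discriminate|]. intros m H k Hk.
  destruct (ominR l a) as [m'|] eqn:E.
  - inversion H; subst. destruct Hk as [<-|Hk]; [apply Rmin_l|].
    eapply Rle_trans; [apply Rmin_r|]. apply IHl; auto.
  - inversion H; subst. destruct Hk as [<-|Hk]; [lra|].
    destruct l; [destruct Hk|]. simpl in E. destruct (ominR l a); discriminate. Qed.
Lemma ominR_att l a m : ominR l a = Some m -> exists k, In k l /\ m = a k.
Proof. revert m; induction l; simpl; [discriminate|]. intros m H.
  destruct (ominR l a) as [m'|] eqn:E.
  - inversion H; subst.
    unfold Rmin; destruct (Rle_dec (a a0) m'); [exists a0; split; auto|].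
    destruct (IHl m' eq_refl) as [k [Hk Hm]]; exists k; split; auto.
  - inversion H; subst. exists a0; auto. Qed.
Lemma sumR_ge_len l a m : (forall k, In k l -> m <= a k) -> INR (length l) * m <= sumR l a.
Proof. induction l; intros H; [simpl; lra|].
  change (INR (length (a0::l))) with (INR (S (length l))); rewrite sumR_cons, S_INR.
  pose proof (H a0 (or_introl eq_refl)).
  assert (INR (length l) * m <= sumR l a) by (apply IHl; intros; apply H; right; auto). nra. Qed.

Lemma jensen_cons X (phi : Vec -> R) (gamma : nat -> R) (x : nat -> Vec) (l : list nat) :
  convex_set X -> convex_on X phi -> forall a,
  (forall k, In k (a::l) -> X (x k) /\ gamma k > 0) ->
  X (fun i => sumR (a::l) (fun k => gamma k * x k i) / sumR (a::l) gamma) /\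
  phi (fun i => sumR (a::l) (fun k => gamma k * x k i) / sumR (a::l) gamma)
    <= sumR (a::l) (fun k => gamma k * phi (x k)) / sumR (a::l) gamma.
Proof.
  intros HXc Hc. induction l as [|b l IH]; intros a H.
  - destruct (H a (or_introl eq_refl)) as [Hxa Hga].
    assert (E : (fun i => sumR (a::nil) (fun k => gamma k * x k i) / sumR (a::nil) gamma) = x a).
    { apply functional_extensionality; intro i. simpl. field. lra. }
    rewrite E. split; auto. simpl. right. field. lra.
  - destruct (H a (or_introl eq_refl)) as [Hxa Hga].
    destruct (IH b) as [HXL HphiL]; [intros; apply H; right; auto|].
    set (L := b :: l) in *.
    assert (HS : 0 < sumR L gamma).
    { apply sumR_pos; [discriminate|]. intros k Hk. destruct (H k); [right; auto|lra]. }
    set (S := sumR L gamma) in *.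
    set (t := gamma a / (gamma a + S)).
    set (xL := fun i => sumR L (fun k => gamma k * x k i) / S) in *.
    assert (E : (fun i => sumR (a::L) (fun k => gamma k * x k i) / sumR (a::L) gamma)
                = vadd (vscal t (x a)) (vscal (1 - t) xL)).
    { apply functional_extensionality; intro i. unfold vadd, vscal, xL, t.
      rewrite !sumR_cons. fold S. field. lra. }
    rewrite E.
    assert (Ht : 0 <= t <= 1).
    { unfold t. split.
      - apply Rlt_le, Rdiv_lt_0_compat; lra.
      - apply (Rmult_le_reg_r (gamma a + S)); [lra|]. field_simplify; lra. }
    assert (E1 : 1 - t = S / (gamma a + S)) by (unfold t; field; lra).
    split.
    + apply HXc; auto.
    + eapply Rle_trans; [apply Hc; auto|].
      rewrite !sumR_cons. fold S.
      apply Rle_trans with (t * phi (x a) + (1 - t) * (sumR L (fun k => gamma k * phi (x k)) / S)).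
      * apply Rplus_le_compat_l, Rmult_le_compat_l; lra.
      * rewrite E1; unfold t. right. field. lra.
Qed.

Lemma div_bound S D F R : 0 < S -> 0 < D -> D <= 2 * S -> F <= R -> 0 <= R -> F / S <= 2 * R / D.
Proof. intros HS HD HDS HFR HR. unfold Rdiv.
  assert (Hu: S * / S = 1) by (field; lra). assert (Hv: D * / D = 1) by (field; lra).
  assert (0 < / S) by (apply Rinv_0_lt_compat; lra). assert (0 < / D) by (apply Rinv_0_lt_compat; lra).
  assert (Huv: / S <= 2 * / D).
  { assert (0 <= (2 * S - D) * (/ S * / D)) by (apply Rmult_le_pos; nra).
    replace ((2 * S - D) * (/ S * / D)) with (2 * (S * / S) * / D - (D * / D) * / S) in H1 by ring.
    rewrite Hu, Hv in H1. lra. }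
  apply Rle_trans with (R * / S); [apply Rmult_le_compat_r; lra|]. nra. Qed.
Theorem mainTheorem17
  (n d : nat) (X : Vec -> Prop) (Delta : Vec -> Prop)
  (f : Vec -> R) (g : Vec -> Vec -> R) (Lf LgX LgD : R)
  (G : Vec -> R) (xstar : Vec)
  (omega : Vec -> R) (domega : Vec -> Vec) (DX : R)
  (N s : nat) (gamma eta : nat -> R)
  (x : nat -> Vec) (dl : nat -> Vec) (h : nat -> Vec)
  (* setting *)
  (HXconv : convex_set X) (HXcomp : compact_set n X)
  (HDcomp : compact_set d Delta)
  (Hfconv : convex_on X f) (Hflip : lipschitz_on n X Lf f)
  (Hgconv : forall dd, Delta dd -> convex_on X (fun y => g y dd))
  (HgXlip : forall dd, Delta dd -> lipschitz_on n X LgX (fun y => g y dd))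
  (HgDlip : forall y, X y -> lipschitz_on d Delta LgD (fun dd => g y dd))
  (HG : forall y, X y -> is_max_on Delta (fun dd => g y dd) (G y))
  (Hxstar : X xstar /\ G xstar <= 0 /\ forall y, X y -> G y <= 0 -> f xstar <= f y)
  (Homega : C1_on n X omega domega) (Homsc : strongly_convex1 n X omega)
  (HDX : 0 <= DX /\ is_max_on (fun p => X (fst p) /\ X (snd p))
                     (fun p => Breg n omega domega (fst p) (snd p)) (DX ^ 2))
  (* algorithm *)
  (HN : (1 <= N)%nat) (Hx1 : X (x 1%nat))
  (Heta : forall k, (1 <= k <= N)%nat -> eta k > 0)
  (Hgamma : forall k, (1 <= k <= N)%nat -> gamma k > 0)
  (Hdl : forall k, (1 <= k <= N)%nat -> Delta (dl k))
  (Hh : forall k, (1 <= k <= N)%nat ->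
     if Rleb (g (x k) (dl k)) (eta k)
     then subgrad n X f (x k) (h k) /\ vnorm n (h k) <= Lf
     else subgrad n X (fun y => g y (dl k)) (x k) (h k) /\ vnorm n (h k) <= LgX)
  (Hstep : forall k, (1 <= k <= N)%nat ->
     is_prox n X omega domega (x k) (vscal (gamma k) (h k)) (x (S k)))
  (Hs : (1 <= s <= N)%nat) :
  let B := filter (fun k => Rleb (g (x k) (dl k)) (eta k)) (Iset s N) in
  let NN := filter (fun k => negb (Rleb (g (x k) (dl k)) (eta k))) (Iset s N) in
  let eps := fun k => G (x k) - g (x k) (dl k) in
  let xbar : Vec := fun i => sumR B (fun k => gamma k * x k i) / sumR B gamma in
  let RHS := DX ^ 2 + / 2 * sumR B (fun k => gamma k ^ 2 * Lf ^ 2)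
                    + / 2 * sumR NN (fun k => gamma k ^ 2 * LgX ^ 2) in
  (match ominR NN (fun k => gamma k * eta k) with
   | None => True
   | Some m => INR (N - s + 1) / 2 * m > RHS
   end) ->
  B <> nil /\
  (match ominR B gamma with
   | None => False
   | Some mB =>
       f xbar - f xstar <=
         (2 * DX ^ 2 + sumR B (fun k => gamma k ^ 2 * Lf ^ 2)
                     + sumR NN (fun k => gamma k ^ 2 * LgX ^ 2))
         / (INR (N - s + 1) * mB)
   end) /\
  G xbar <= sumR B (fun k => gamma k * (eta k + eps k)) / sumR B gamma.
Proof.
  intros B NN eps xbar RHS Hcond.
  assert (ERHS: RHS = DX ^ 2 + / 2 * sumR B (fun k => gamma k ^ 2 * Lf ^ 2)
                    + / 2 * sumR NN (fun k => gamma k ^ 2 * LgX ^ 2)) by reflexivity.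
  destruct Hxstar as [Hxs [HGxs Hopt]].
  destruct HDX as [HDX0 [_ HDXmax]].
  assert (HXk: forall k, (1 <= k <= S N)%nat -> X (x k)).
  { intro k; induction k; intros Hk; [lia|]. destruct (Nat.eq_dec k 0) as [->|].
    exact Hx1. apply (proj1 (Hstep k ltac:(lia))). }
  assert (inI: forall k, In k (Iset s N) -> (1 <= k <= N)%nat).
  { intros k Hk. unfold Iset in Hk. rewrite in_seq in Hk. lia. }
  assert (inB: forall k, In k B -> (1 <= k <= N)%nat /\ Rleb (g (x k) (dl k)) (eta k) = true).
  { intros k Hk. apply filter_In in Hk. destruct Hk; split; auto. }
  assert (inN: forall k, In k NN -> (1 <= k <= N)%nat /\ Rleb (g (x k) (dl k)) (eta k) = false).
  { intros k Hk. apply filter_In in Hk. destruct Hk as [H1 H2]; split; auto.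
    destruct (Rleb (g (x k) (dl k)) (eta k)); auto. }
  assert (Hsplit: forall a, sumR (Iset s N) a = sumR B a + sumR NN a)
    by (intro; apply sumR_split).
  assert (Hlen: length (Iset s N) = (length B + length NN)%nat) by apply length_split.
  assert (HlenI: length (Iset s N) = (N - s + 1)%nat) by (unfold Iset; apply length_seq).
  set (a := fun k => gamma k * (inner n (h k) (x k) - inner n (h k) xstar)).
  set (V := fun k => Breg n omega domega (x k) xstar).
  set (c := fun k => if Rleb (g (x k) (dl k)) (eta k) then / 2 * (gamma k ^ 2 * Lf ^ 2)
                     else / 2 * (gamma k ^ 2 * LgX ^ 2)).
  assert (Hstep1: forall k, (1 <= k <= N)%nat -> a k <= V k - V (S k) + c k).
  { intros k Hk. unfold a, V, c.
    assert (HXk0 : X (x k)) by (apply HXk; lia).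
    assert (HXk1 : X (x (S k))) by (apply HXk; lia).
    pose proof (three_point n X omega domega (x k) (vscal (gamma k) (h k)) (x (S k)) xstar
                  HXconv Homega HXk0 (Hstep k Hk) Hxs) as H3.
    rewrite !inner_scal_l in H3.
    pose proof (breg_lb n X omega domega (x k) (x (S k)) HXconv Homega Homsc HXk0 HXk1) as Hbl.
    rewrite vnorm_sq, <- inner_sub_sym in Hbl.
    pose proof (inner_half n (vscal (gamma k) (h k)) (vsub (x k) (x (S k)))) as Hcs.
    rewrite !inner_scal_l, !inner_scal_r, inner_sub_r in Hcs.
    pose proof (Hgamma k Hk) as Hg.
    pose proof (Hh k Hk) as Hhk.
    assert (Hgen: forall L, vnorm n (h k) <= L ->
      gamma k * (inner n (h k) (x k) - inner n (h k) xstar) <=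
      Breg n omega domega (x k) xstar - Breg n omega domega (x (S k)) xstar
      + / 2 * (gamma k ^ 2 * L ^ 2)).
    { intros L HL. pose proof (vnorm_pos n (h k)) as Hv.
      rewrite <- (vnorm_sq n (h k)) in Hcs.
      assert (Hvv: vnorm n (h k) ^ 2 <= L ^ 2) by nra.
      assert (Hgg: gamma k * (gamma k * vnorm n (h k) ^ 2) <= gamma k ^ 2 * L ^ 2).
      { rewrite <- Rmult_assoc. replace (gamma k ^ 2) with (gamma k * gamma k) by ring.
        apply Rmult_le_compat_l; nra. }
      lra. }
    destruct (Rleb (g (x k) (dl k)) (eta k)); destruct Hhk as [_ Hn]; apply Hgen, Hn. }
  assert (HA: sumR (Iset s N) a <= RHS).
  { apply Rle_trans with (sumR (Iset s N) (fun k => (V k - V (S k)) + c k)).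
    { apply sumR_le. intros k Hk. apply Hstep1, inI, Hk. }
    rewrite sumR_plus. unfold Iset at 1. rewrite telesc.
    assert (HV1: V (s + (N - s + 1))%nat >= 0).
    { unfold V. eapply Rge_trans; [apply (breg_lb n X); auto; apply HXk; lia|].
      pose proof (vnorm_pos n (vsub xstar (x (s + (N - s + 1))%nat))). nra. }
    assert (HVs: V s <= DX ^ 2).
    { unfold V. apply (HDXmax (x s, xstar)). simpl. split; auto. apply HXk; lia. }
    rewrite Hsplit.
    rewrite (sumR_ext_in B c (fun k => / 2 * (gamma k ^ 2 * Lf ^ 2))).
    2: { intros k Hk. unfold c. rewrite (proj2 (inB k Hk)). reflexivity. }
    rewrite (sumR_ext_in NN c (fun k => / 2 * (gamma k ^ 2 * LgX ^ 2))).
    2: { intros k Hk. unfold c. rewrite (proj2 (inN k Hk)). reflexivity. }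
    rewrite !sumR_scal. rewrite ERHS. lra. }
  rewrite Hsplit in HA.
  set (T := sumR NN (fun k => gamma k * eta k)).
  assert (HSN: T <= sumR NN a).
  { apply sumR_le. intros k Hk. destruct (inN k Hk) as [Hk1 HR].
    pose proof (Hh k Hk1) as Hhk. rewrite HR in Hhk. destruct Hhk as [Hsub _].
    specialize (Hsub xstar Hxs). simpl in Hsub. rewrite inner_sub_r in Hsub.
    unfold Rleb in HR. destruct (Rle_dec (g (x k) (dl k)) (eta k)); [discriminate|].
    pose proof (proj2 (HG xstar Hxs) (dl k) (Hdl k Hk1)). simpl in H.
    pose proof (Hgamma k Hk1). unfold a. nra. }
  set (F := sumR B (fun k => gamma k * (f (x k) - f xstar))).
  assert (HSB: F <= sumR B a).
  { apply sumR_le. intros k Hk. destruct (inB k Hk) as [Hk1 HR].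
    pose proof (Hh k Hk1) as Hhk. rewrite HR in Hhk. destruct Hhk as [Hsub _].
    specialize (Hsub xstar Hxs). rewrite inner_sub_r in Hsub.
    pose proof (Hgamma k Hk1). unfold a. nra. }
  assert (HT0: 0 <= T).
  { apply sumR_nonneg. intros k Hk. destruct (inN k Hk) as [Hk1 _].
    pose proof (Hgamma k Hk1); pose proof (Heta k Hk1). nra. }
  assert (HRHS0: 0 <= RHS).
  { rewrite ERHS. assert (0 <= sumR B (fun k => gamma k ^ 2 * Lf ^ 2)) by
      (apply sumR_nonneg; intros; apply Rmult_le_pos; apply pow2_ge_0).
    assert (0 <= sumR NN (fun k => gamma k ^ 2 * LgX ^ 2)) by
      (apply sumR_nonneg; intros; apply Rmult_le_pos; apply pow2_ge_0).
    pose proof (pow2_ge_0 DX). lra. }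
  assert (HLI: INR (N - s + 1) = INR (length B) + INR (length NN)).
  { rewrite <- HlenI, Hlen, plus_INR. reflexivity. }
  assert (HLI1: 1 <= INR (N - s + 1)).
  { replace 1 with (INR 1) by reflexivity. apply le_INR. lia. }
  assert (HBne: B <> nil).
  { intro HBnil. assert (HNNne: NN <> nil).
    { intro HNnil. rewrite HBnil, HNnil in Hlen. rewrite HlenI in Hlen. simpl in Hlen. lia. }
    destruct (ominR_some NN (fun k => gamma k * eta k) HNNne) as [m Hm].
    rewrite Hm in Hcond.
    destruct (ominR_att _ _ _ Hm) as [k0 [Hk0 Hmk]].
    destruct (inN k0 Hk0) as [Hk01 _].
    pose proof (Hgamma k0 Hk01); pose proof (Heta k0 Hk01).
    assert (Hm0: 0 < m) by (rewrite Hmk; nra).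
    pose proof (sumR_ge_len NN _ m (ominR_le _ _ _ Hm)) as Hge. fold T in Hge.
    rewrite HBnil in HLI. simpl in HLI.
    assert (HB0 : sumR B a = 0) by (rewrite HBnil; reflexivity).
    nra. }
  assert (HinB : forall k, In k B -> X (x k) /\ gamma k > 0).
  { intros k Hk. destruct (inB k Hk) as [Hk1 _]. split; [apply HXk; lia|apply Hgamma; auto]. }
  assert (HSg: 0 < sumR B gamma).
  { apply sumR_pos; auto. intros k Hk. apply (HinB k Hk). }
  split; [exact HBne|]. split.
  - destruct (ominR_some B gamma HBne) as [mB HmB]. rewrite HmB.
    destruct (ominR_att _ _ _ HmB) as [k0 [Hk0 Hmk]].
    assert (HmB0: 0 < mB) by (rewrite Hmk; apply (HinB k0 Hk0)).
    pose proof (sumR_ge_len B _ mB (ominR_le _ _ _ HmB)) as HgeB.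
    destruct (jensen_cons X f gamma x (tl B) HXconv Hfconv (hd O B)) as [HXxb Hfxb].
    { destruct B; [congruence|]. exact HinB. }
    replace (hd O B :: tl B) with B in HXxb, Hfxb by (destruct B; [congruence|reflexivity]).
    change (fun i => sumR B (fun k => gamma k * x k i) / sumR B gamma) with xbar in HXxb, Hfxb.
    assert (HF: sumR B (fun k => gamma k * f (x k)) = F + f xstar * sumR B gamma).
    { unfold F. rewrite (sumR_ext_in B (fun k => gamma k * (f (x k) - f xstar))
          (fun k => gamma k * f (x k) - f xstar * gamma k)) by (intros; ring).
      rewrite sumR_minus, sumR_scal. ring. }
    rewrite HF in Hfxb.
    assert (Hfx: f xbar - f xstar <= F / sumR B gamma).
    { replace (F / sumR B gamma) with ((F + f xstar * sumR B gamma) / sumR B gamma - f xstar)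
        by (field; lra). lra. }
    replace (2 * DX ^ 2 + sumR B (fun k => gamma k ^ 2 * Lf ^ 2) +
             sumR NN (fun k => gamma k ^ 2 * LgX ^ 2)) with (2 * RHS) by (rewrite ERHS; field).
    assert (HD: 0 < INR (N - s + 1) * mB) by nra.
    assert (H2R: 0 <= 2 * RHS / (INR (N - s + 1) * mB)).
    { unfold Rdiv. apply Rmult_le_pos; [lra|]. apply Rlt_le, Rinv_0_lt_compat; lra. }
    destruct (Rle_or_lt (INR (N - s + 1)) (2 * INR (length B))) as [Hc1|Hc1].
    + eapply Rle_trans; [exact Hfx|]. apply div_bound; try lra. nra.
    + assert (HNNne: NN <> nil).
      { intro HNnil. rewrite HNnil in HLI. simpl in HLI. pose proof (pos_INR (length B)). lra. }
      destruct (ominR_some NN (fun k => gamma k * eta k) HNNne) as [m Hm].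
      rewrite Hm in Hcond.
      destruct (ominR_att _ _ _ Hm) as [k1 [Hk1 Hmk1]].
      destruct (inN k1 Hk1) as [Hk11 _].
      pose proof (Hgamma k1 Hk11); pose proof (Heta k1 Hk11).
      assert (Hm0: 0 < m) by (rewrite Hmk1; nra).
      pose proof (sumR_ge_len NN _ m (ominR_le _ _ _ Hm)) as Hge. fold T in Hge.
      assert (HF0: F < 0) by nra.
      assert (F / sumR B gamma < 0).
      { unfold Rdiv. assert (0 < / sumR B gamma) by (apply Rinv_0_lt_compat; lra). nra. }
      lra.
  - destruct (jensen_cons X f gamma x (tl B) HXconv Hfconv (hd O B)) as [HXxb _].
    { destruct B; [congruence|]. exact HinB. }
    replace (hd O B :: tl B) with B in HXxb by (destruct B; [congruence|reflexivity]).
    change (fun i => sumR B (fun k => gamma k * x k i) / sumR B gamma) with xbar in HXxb.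
    destruct (HG xbar HXxb) as [[db [Hdb Hgdb]] _].
    destruct (jensen_cons X (fun y => g y db) gamma x (tl B) HXconv (Hgconv db Hdb) (hd O B))
      as [_ Hgxb].
    { destruct B; [congruence|]. exact HinB. }
    replace (hd O B :: tl B) with B in Hgxb by (destruct B; [congruence|reflexivity]).
    change (fun i => sumR B (fun k => gamma k * x k i) / sumR B gamma) with xbar in Hgxb.
    simpl in Hgdb. rewrite <- Hgdb. eapply Rle_trans; [exact Hgxb|].
    unfold Rdiv. apply Rmult_le_compat_r; [apply Rlt_le, Rinv_0_lt_compat; lra|].
    apply sumR_le. intros k Hk. destruct (inB k Hk) as [Hk1 HR].
    pose proof (proj2 (HG (x k) (proj1 (HinB k Hk))) db Hdb) as H1. simpl in H1.
    unfold Rleb in HR. destruct (Rle_dec (g (x k) (dl k)) (eta k)); [|discriminate].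
    assert (Eeps: eps k = G (x k) - g (x k) (dl k)) by reflexivity.
    rewrite Eeps. pose proof (Hgamma k Hk1). nra.
Qed.
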